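(* Let $\omega\in\Omega$ have exactly one infinite $0$-cluster $\xi_0$ and exactly one infinite $1$-cluster $\xi_1$. Then the number of infinite contours of $\phi(\omega)$ that are incident to both $\xi_0$ and $\xi_1$ is exactly one.
   Context: Let $G$ be the square grid with vertex set $\mathbb{Z}^2$ and nearest-neighbour edges. The face of $G$ with lower-left corner $(m,n)$ is black if $m+n$ is even, white otherwise. $\Omega\subset\{0,1\}^{\mathbb{Z}^2}$ is the set of $\omega$ such that for every black face the states of its four vertices, listed clockwise from the lower-left corner, form one of $0000,1111,0011,1100,0110,1001$. A cluster of $\omega$ is a maximal $G$-connected set of vertices on which $\omega$ is constant ($0$- or $1$-cluster), infinite if it has infinitely many vertices. Let $\mathbb{L}_1$ have vertices $(m-\tfrac12,n+\tfrac12)$, $m,n$ both even, and $\mathbb{L}_2$ vertices $(m-\tfrac12,n+\tfrac12)$, $m,n$ both odd; in each, two vertices are joined by an edge (a closed segment of length $2$) iff at Euclidean distance $2$. The center of each black face $F$ is the midpoint of exactly one edge $e_1$ of $\mathbb{L}_1$ and one edge $e_2$ of $\mathbb{L}_2$. Define $\phi(\omega)\in\{0,1\}^{E(\mathbb{L}_1)\cup E(\mathbb{L}_2)}$: if the configuration around $F$ is $0000$ or $1111$ both get $0$; if the two upper vertices share a state different from the two lower ones, the horizontal one of $e_1,e_2$ gets $1$, the vertical $0$; if the two left vertices share a state different from the two right ones, the vertical one gets $1$, the horizontal $0$. Edges with value $1$ are present; a contour is a connected component of the set of present edges, infinite if it has infinitely many edges. A cluster is incident to a contour if some vertex of the cluster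 is at Euclidean distance $\tfrac12$ from some edge (segment) of the contour. *)

(* Defs.v *)
From Stdlib Require Import ZArith Reals Lra List Relations.
Open Scope Z_scope.

Definition vtx := (Z * Z)%type.
Definition config := vtx -> bool.

Definition G_adj (u v : vtx) : Prop :=
  Z.abs (fst u - fst v) + Z.abs (snd u - snd v) = 1.

(* face with lower-left corner (m,n) is black iff m+n even *)
Definition black (m n : Z) : Prop := Z.even (m + n) = true.

(* states listed clockwise from the lower-left corner:
   LL=(m,n), UL=(m,n+1), UR=(m+1,n+1), LR=(m+1,n) *)
Definition allowed (a b c d : bool) : Prop :=
  (a,b,c,d) = (false,false,false,false) \/ (a,b,c,d) = (true,true,true,true) \/
  (a,b,c,d) = (false,false,true,true)   \/ (a,b,c,d) = (true,true,false,false) \/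
  (a,b,c,d) = (false,true,true,false)   \/ (a,b,c,d) = (true,false,false,true).

Definition in_Omega (w : config) : Prop :=
  forall m n, black m n ->
    allowed (w (m,n)) (w (m,n+1)) (w (m+1,n+1)) (w (m+1,n)).

Definition finite_set {T : Type} (P : T -> Prop) : Prop :=
  exists l : list T, forall x, P x -> In x l.
Definition infinite_set {T : Type} (P : T -> Prop) : Prop := ~ finite_set P.

Definition same_set {T : Type} (P Q : T -> Prop) : Prop := forall x, P x <-> Q x.

Definition mono_step (w : config) (u v : vtx) : Prop := G_adj u v /\ w u = w v.
Definition same_cluster (w : config) : relation vtx := clos_refl_trans vtx (mono_step w).

(* a cluster = maximal connected monochromatic set = class of some vertex *)
Definition is_cluster (w : config) (C : vtx -> Prop) : Prop :=
  exists v, forall x, C x <-> same_cluster w v x.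
Definition is_b_cluster (w : config) (b : bool) (C : vtx -> Prop) : Prop :=
  exists v, w v = b /\ forall x, C x <-> same_cluster w v x.

Inductive lat := L1 | L2.
Inductive dir := Hor | Ver.

(* lattice vertex (l,a,b):
   L1 : (m - 1/2, n + 1/2) with m = 2a, n = 2b (both even)
   L2 : (m - 1/2, n + 1/2) with m = 2a+1, n = 2b+1 (both odd) *)
Definition lvtx := (lat * Z * Z)%type.
Definition lvtx_pos (p : lvtx) : R * R :=
  match p with
  | (L1, a, b) => (IZR (2*a) - /2, IZR (2*b) + /2)%R
  | (L2, a, b) => (IZR (2*a+1) - /2, IZR (2*b+1) + /2)%R
  end.

(* Two vertices of the same lattice are at distance 2 iff their indices differ by
   one unit step; an edge is encoded by its lower/left endpoint and direction. *)
Inductive edge := Edge (l : lat) (a b : Z) (d : dir).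

Definition edge_ends (e : edge) : lvtx * lvtx :=
  match e with
  | Edge l a b Hor => ((l,a,b), (l,a+1,b))
  | Edge l a b Ver => ((l,a,b), (l,a,b+1))
  end.

Definition edge_dir (e : edge) : dir := match e with Edge _ _ _ d => d end.

(* the black face F=(m,n) whose center (m+1/2,n+1/2) is the midpoint of e *)
Definition face_of (e : edge) : Z * Z :=
  match e with
  | Edge L1 a b Hor => (2*a, 2*b)
  | Edge L1 a b Ver => (2*a-1, 2*b+1)
  | Edge L2 a b Hor => (2*a+1, 2*b+1)
  | Edge L2 a b Ver => (2*a, 2*b+2)
  end.

Lemma face_of_black e : black (fst (face_of e)) (snd (face_of e)).
Proof.
  unfold black; destruct e as [[|] a b [|]]; cbn [face_of fst snd]; apply Z.even_spec;
  unfold Z.Even; first [ exists (a+b); ring | exists (a+b+1); ring ].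
Qed.

Lemma face_of_midpoint e :
  let '(p, q) := edge_ends e in
  let '(m, n) := face_of e in
  ((fst (lvtx_pos p) + fst (lvtx_pos q)) / 2 = IZR m + /2 /\
   (snd (lvtx_pos p) + snd (lvtx_pos q)) / 2 = IZR n + /2)%R.
Proof.
  destruct e as [[|] a b [|]]; cbn [edge_ends face_of lvtx_pos fst snd];
  repeat rewrite ?plus_IZR, ?minus_IZR, ?mult_IZR; split; lra.
Qed.

Definition phi (w : config) (e : edge) : bool :=
  let '(m, n) := face_of e in
  let ll := w (m,n) in let ul := w (m,n+1) in
  let ur := w (m+1,n+1) in let lr := w (m+1,n) in
  match edge_dir e with
  | Hor =>
      Bool.eqb ul ur && negb (Bool.eqb ll ul) && negb (Bool.eqb lr ul)
  | Ver =>
      Bool.eqb ll ul && negb (Bool.eqb lr ll) && negb (Bool.eqb ur ll)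
  end.

Definition present (w : config) (e : edge) : Prop := phi w e = true.

Definition share_end (e f : edge) : Prop :=
  let '(p, q) := edge_ends e in let '(p', q') := edge_ends f in
  p = p' \/ p = q' \/ q = p' \/ q = q'.

Definition contour_step (w : config) (e f : edge) : Prop :=
  present w e /\ present w f /\ share_end e f.

Definition is_contour (w : config) (K : edge -> Prop) : Prop :=
  exists e, present w e /\
    forall f, K f <-> (present w f /\ clos_refl_trans edge (contour_step w) e f).

Definition dist2 (P Q : R * R) : R :=
  ((fst P - fst Q) * (fst P - fst Q) + (snd P - snd Q) * (snd P - snd Q))%R.

Definition seg_point (A B : R * R) (t : R) : R * R :=
  (fst A + t * (fst B - fst A), snd A + t * (snd B - snd A))%R.

(* Euclidean distance from P to the closed segment [A,B] equals 1/2
   (the infimum of squared distances is attained and equals 1/4) *)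
Definition dist_seg_half (P A B : R * R) : Prop :=
  (exists t, 0 <= t <= 1 /\ dist2 P (seg_point A B t) = /4)%R /\
  (forall t, 0 <= t <= 1 -> /4 <= dist2 P (seg_point A B t))%R.

Definition vtx_pos (v : vtx) : R * R := (IZR (fst v), IZR (snd v)).

Definition incident (C : vtx -> Prop) (K : edge -> Prop) : Prop :=
  exists v e, C v /\ K e /\
    dist_seg_half (vtx_pos v) (lvtx_pos (fst (edge_ends e))) (lvtx_pos (snd (edge_ends e))).

(* Main.v *)
Require Import Defs.
From Stdlib Require Import ZArith Reals Lra Lia List Relations Classical ClassicalDescription Bool.
Open Scope Z_scope.

Lemma black_iff m n : black m n <-> exists k, m + n = 2*k.
Proof. unfold black. rewrite Z.even_spec. unfold Z.Even. split; intros [k H]; exists k; lia. Qed.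

Lemma not_black_iff m n : ~ black m n <-> exists k, m + n = 2*k+1.
Proof.
  rewrite black_iff. split.
  - intros H. destruct (Z.Even_or_Odd (m+n)) as [[k Hk]|[k Hk]].
    + exfalso; apply H; exists k; lia.
    + exists k; lia.
  - intros [k Hk] [j Hj]. lia.
Qed.

Definition corner (F : Z*Z) (u : vtx) : Prop :=
  u = F \/ u = (fst F, snd F + 1) \/ u = (fst F + 1, snd F) \/ u = (fst F + 1, snd F + 1).

Definition crosses (e : edge) (u v : vtx) : Prop :=
  let m := fst (face_of e) in let n := snd (face_of e) in
  match edge_dir e with
  | Hor => (u = (m,n) /\ v = (m,n+1)) \/ (v = (m,n) /\ u = (m,n+1)) \/
           (u = (m+1,n) /\ v = (m+1,n+1)) \/ (v = (m+1,n) /\ u = (m+1,n+1))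
  | Ver => (u = (m,n) /\ v = (m+1,n)) \/ (v = (m,n) /\ u = (m+1,n)) \/
           (u = (m,n+1) /\ v = (m+1,n+1)) \/ (v = (m,n+1) /\ u = (m+1,n+1))
  end.

Lemma crosses_sym e u v : crosses e u v -> crosses e v u.
Proof. unfold crosses. destruct (edge_dir e); tauto. Qed.

Lemma pair_eq (a b c d : Z) : (a,b) = (c,d) <-> a = c /\ b = d.
Proof. split; [intros H; inversion H; auto | intros [-> ->]; auto]. Qed.

Ltac zsimpl := repeat match goal with
  | H : (_,_) = (_,_) |- _ => apply pair_eq in H; destruct H
  | H : _ /\ _ |- _ => destruct H
  | H : exists _, _ |- _ => destruct H
  end.

Lemma face_of_inj e e' : face_of e = face_of e' -> edge_dir e = edge_dir e' -> e = e'.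
Proof.
  destruct e as [[|] a b [|]], e' as [[|] a' b' [|]]; cbn [face_of edge_dir]; intros H1 H2;
  try discriminate; apply pair_eq in H1; destruct H1;
  first [ exfalso; lia | assert (a = a') by lia; assert (b = b') by lia; subst; reflexivity ].
Qed.

Lemma black_edges m n : black m n ->
  (exists eh, face_of eh = (m,n) /\ edge_dir eh = Hor) /\
  (exists ev, face_of ev = (m,n) /\ edge_dir ev = Ver).
Proof.
  rewrite black_iff; intros [k Hk].
  destruct (Z.Even_or_Odd m) as [[p Hp]|[p Hp]].
  - split.
    + exists (Edge L1 p (k - p) Hor); cbn [face_of edge_dir]; split; [apply pair_eq; lia|auto].
    + exists (Edge L2 p (k - p - 1) Ver); cbn [face_of edge_dir]; split; [apply pair_eq; lia|auto].
  - split.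
    + exists (Edge L2 p (k - p - 1) Hor); cbn [face_of edge_dir]; split; [apply pair_eq; lia|auto].
    + exists (Edge L1 (p+1) (k - p - 1) Ver); cbn [face_of edge_dir]; split; [apply pair_eq; lia|auto].
Qed.

Lemma face_black e : black (fst (face_of e)) (snd (face_of e)).
Proof. apply face_of_black. Qed.

Lemma crosses_adj e u v : crosses e u v -> G_adj u v.
Proof.
  unfold crosses, G_adj. destruct (edge_dir e); intros H;
  repeat destruct H as [H|H]; destruct H; subst; cbn; lia.
Qed.

Lemma crosses_corner e u v : crosses e u v -> corner (face_of e) u /\ corner (face_of e) v.
Proof.
  unfold crosses, corner. destruct (face_of e) as [m n]; cbn [fst snd].
  destruct (edge_dir e); intros H;
  repeat destruct H as [H|H]; destruct H; subst; tauto.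
Qed.

Ltac edge_eq := first [ exfalso; lia | f_equal; lia ].

Lemma crosses_unique e e' u v : crosses e u v -> crosses e' u v -> e = e'.
Proof.
  destruct e as [[|] a b [|]], e' as [[|] a' b' [|]]; unfold crosses;
  cbn [face_of edge_dir fst snd]; intros H1 H2;
  repeat destruct H1 as [H1|H1]; repeat destruct H2 as [H2|H2];
  zsimpl; subst; zsimpl; edge_eq.
Qed.

Lemma G_adj_cases (x y x' y' : Z) : G_adj (x,y) (x',y') ->
  (x' = x+1 /\ y' = y) \/ (x' = x-1 /\ y' = y) \/ (x' = x /\ y' = y+1) \/ (x' = x /\ y' = y-1).
Proof. unfold G_adj; cbn [fst snd]; lia. Qed.

Lemma G_adj_sym u v : G_adj u v -> G_adj v u.
Proof. unfold G_adj; lia. Qed.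

Lemma cross_exists_h x y : exists e, crosses e (x,y) (x+1,y).
Proof.
  destruct (classic (black x y)) as [Hb|Hb].
  - destruct (black_edges x y Hb) as [_ [ev [Hf Hd]]]. exists ev.
    unfold crosses. rewrite Hd, Hf. cbn [fst snd]. left; auto.
  - assert (Hb' : black x (y-1)).
    { apply not_black_iff in Hb. apply black_iff. destruct Hb as [k Hk]. exists k; lia. }
    destruct (black_edges x (y-1) Hb') as [_ [ev [Hf Hd]]]. exists ev.
    unfold crosses. rewrite Hd, Hf. cbn [fst snd].
    right; right; left. split; apply pair_eq; lia.
Qed.

Lemma cross_exists_v x y : exists e, crosses e (x,y) (x,y+1).
Proof.
  destruct (classic (black x y)) as [Hb|Hb].
  - destruct (black_edges x y Hb) as [[eh [Hf Hd]] _]. exists eh.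
    unfold crosses. rewrite Hd, Hf. cbn [fst snd]. left; auto.
  - assert (Hb' : black (x-1) y).
    { apply not_black_iff in Hb. apply black_iff. destruct Hb as [k Hk]. exists k; lia. }
    destruct (black_edges (x-1) y Hb') as [[eh [Hf Hd]] _]. exists eh.
    unfold crosses. rewrite Hd, Hf. cbn [fst snd].
    right; right; left. split; apply pair_eq; lia.
Qed.

Lemma cross_exists u v : G_adj u v -> exists e, crosses e u v.
Proof.
  destruct u as [x y], v as [x' y']. intros H.
  destruct (G_adj_cases _ _ _ _ H) as [[-> ->]|[[-> ->]|[[-> ->]|[-> ->]]]].
  - apply cross_exists_h.
  - destruct (cross_exists_h (x-1) y) as [e He]. exists e. apply crosses_sym.
    replace (x-1+1) with x in He by lia. exact He.
  - apply cross_exists_v.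
  - destruct (cross_exists_v x (y-1)) as [e He]. exists e. apply crosses_sym.
    replace (y-1+1) with y in He by lia. exact He.
Qed.

Local Open Scope bool_scope.
Definition hform (ll ul ur lr : bool) := Bool.eqb ul ur && negb (Bool.eqb ll ul) && negb (Bool.eqb lr ul).
Definition vform (ll ul ur lr : bool) := Bool.eqb ll ul && negb (Bool.eqb lr ll) && negb (Bool.eqb ur ll).

Lemma phi_eq w e : phi w e =
  let m := fst (face_of e) in let n := snd (face_of e) in
  (match edge_dir e with Hor => hform | Ver => vform end)
    (w (m,n)) (w (m,n+1)) (w (m+1,n+1)) (w (m+1,n)).
Proof. unfold phi. destruct (face_of e) as [m n]. destruct (edge_dir e); reflexivity. Qed.

Lemma present_iff w e u v : in_Omega w -> crosses e u v -> (present w e <-> w u <> w v).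
Proof.
  intros Hom. unfold present. rewrite phi_eq. unfold crosses.
  pose proof (face_black e) as Hb.
  destruct (face_of e) as [m n]. cbn [fst snd] in *.
  specialize (Hom m n Hb). unfold allowed in Hom.
  destruct (edge_dir e); intros H; repeat destruct H as [H|H]; destruct H; subst;
  unfold hform, vform;
  destruct (w (m,n)), (w (m,n+1)), (w (m+1,n+1)), (w (m+1,n));
  (destruct Hom as [H|[H|[H|[H|[H|H]]]]]; try discriminate); cbn;
  split; intro; congruence.
Qed.

Lemma not_both_present w e e' : in_Omega w -> face_of e = face_of e' ->
  edge_dir e = Hor -> edge_dir e' = Ver -> present w e -> present w e' -> False.
Proof.
  intros Hom Hf Hd Hd'. unfold present. rewrite !phi_eq. rewrite <- Hf, Hd, Hd'.
  pose proof (face_black e) as Hb.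
  destruct (face_of e) as [m n]. cbn [fst snd] in *.
  specialize (Hom m n Hb). unfold allowed in Hom. unfold hform, vform.
  destruct (w (m,n)), (w (m,n+1)), (w (m+1,n+1)), (w (m+1,n));
  (destruct Hom as [H|[H|[H|[H|[H|H]]]]]; try discriminate); cbn; congruence.
Qed.

Lemma diff_present w u v : in_Omega w -> G_adj u v -> w u <> w v ->
  exists e, present w e /\ crosses e u v.
Proof.
  intros Hom Ha Hd. destruct (cross_exists u v Ha) as [e He]. exists e. split; auto.
  apply (present_iff w e u v Hom He). auto.
Qed.

Definition wface (c : lvtx) : Z*Z :=
  match c with
  | (L1, a, b) => (2*a-1, 2*b)
  | (L2, a, b) => (2*a, 2*b+1)
  end.

Definition side (Q : Z*Z) (u v : vtx) : Prop :=
  let x := fst Q in let y := snd Q in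
  (u = (x,y) /\ v = (x+1,y)) \/ (v = (x,y) /\ u = (x+1,y)) \/
  (u = (x,y+1) /\ v = (x+1,y+1)) \/ (v = (x,y+1) /\ u = (x+1,y+1)) \/
  (u = (x,y) /\ v = (x,y+1)) \/ (v = (x,y) /\ u = (x,y+1)) \/
  (u = (x+1,y) /\ v = (x+1,y+1)) \/ (v = (x+1,y) /\ u = (x+1,y+1)).

Lemma side_sym Q u v : side Q u v -> side Q v u.
Proof. unfold side. tauto. Qed.

Definition endpoint (c : lvtx) (e : edge) : Prop := c = fst (edge_ends e) \/ c = snd (edge_ends e).

Lemma wface_inj c c' : wface c = wface c' -> c = c'.
Proof.
  destruct c as [[[|] a] b], c' as [[[|] a'] b']; cbn [wface]; intros H; zsimpl;
  first [exfalso; lia | f_equal; [f_equal|]; lia].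
Qed.

Lemma wface_white c : ~ black (fst (wface c)) (snd (wface c)).
Proof. apply not_black_iff. destruct c as [[[|] a] b]; cbn [wface fst snd]; [exists (a+b-1) | exists (a+b)]; lia. Qed.

Lemma W0 x y e u v : ~ black x y -> crosses e u v -> side (x,y) u v ->
  exists c, endpoint c e /\ wface c = (x,y).
Proof.
  intros Hw. apply not_black_iff in Hw. destruct Hw as [k Hk].
  destruct e as [[|] a b [|]]; unfold crosses, side, endpoint;
  cbn [face_of edge_dir fst snd edge_ends]; intros H1 H2;
  repeat destruct H1 as [H1|H1]; zsimpl; subst;
  repeat destruct H2 as [H2|H2]; zsimpl;
  first [ exfalso; lia
        | eexists; split; [left; reflexivity | cbn [wface]; apply pair_eq; split; lia]
        | eexists; split; [right; reflexivity | cbn [wface]; apply pair_eq; split; lia] ].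
Qed.

Lemma SB x y e u v : black x y -> crosses e u v -> side (x,y) u v -> face_of e = (x,y).
Proof.
  intros Hb. apply black_iff in Hb. destruct Hb as [k Hk].
  destruct e as [[|] a b [|]]; unfold crosses, side;
  cbn [face_of edge_dir fst snd]; intros H1 H2;
  repeat destruct H1 as [H1|H1]; zsimpl; subst;
  repeat destruct H2 as [H2|H2]; zsimpl;
  first [ exfalso; lia | apply pair_eq; split; lia ].
Qed.

Ltac pe := apply pair_eq; split; lia.

Lemma Wend c e : endpoint c e -> exists u, corner (face_of e) u /\ corner (wface c) u.
Proof.
  unfold endpoint, corner.
  destruct e as [[|] a b [|]]; cbn [face_of edge_ends fst snd]; intros [-> | ->]; cbn [wface fst snd].
  - exists (2*a, 2*b); split; [left; pe | right; right; left; pe].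
  - exists (2*a+1, 2*b); split; [right; right; left; pe | left; pe].
  - exists (2*a-1, 2*b+1); split; [left; pe | right; left; pe].
  - exists (2*a-1, 2*b+2); split; [right; left; pe | left; pe].
  - exists (2*a+1, 2*b+1); split; [left; pe | right; right; left; pe].
  - exists (2*a+2, 2*b+1); split; [right; right; left; pe | left; pe].
  - exists (2*a, 2*b+2); split; [left; pe | right; left; pe].
  - exists (2*a, 2*b+3); split; [right; left; pe | left; pe].
Qed.

Definition crossK (K : edge -> Prop) (u v : vtx) : Prop := exists e, K e /\ crosses e u v.

Lemma crossK_sym K u v : crossK K u v -> crossK K v u.
Proof. intros [e [H1 H2]]; exists e; split; auto; apply crosses_sym; auto. Qed.

Lemma share_end_sym e f : share_end e f -> share_end f e.
Proof. unfold share_end. destruct (edge_ends e), (edge_ends f). intuition. Qed.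

Lemma contour_present w K e : is_contour w K -> K e -> present w e.
Proof. intros [e0 [_ H]] He. apply H in He. tauto. Qed.

Lemma contour_closed w K e f : is_contour w K -> K e -> present w f -> share_end e f -> K f.
Proof.
  intros [e0 [He0 H]] He Pf Hs. apply H. apply H in He. destruct He as [Pe Hc].
  split; auto. eapply rt_trans; [exact Hc|]. apply rt_step. split; auto.
Qed.

Lemma share_end_of_endpoint c e f : endpoint c e -> endpoint c f -> share_end e f.
Proof.
  unfold endpoint, share_end. destruct (edge_ends e) as [p q], (edge_ends f) as [p' q'].
  cbn [fst snd]. intuition congruence.
Qed.

Lemma black_side_edge w K x y u v : in_Omega w -> is_contour w K ->
  black x y -> side (x,y) u v ->
  exists e0, crosses e0 u v /\ face_of e0 = (x,y) /\ (crossK K u v <-> K e0) /\ (w u <> w v <-> present w e0).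
Proof.
  intros Hom Kc Hb Hs.
  assert (Ha : G_adj u v).
  { unfold side in Hs; cbn [fst snd] in Hs. unfold G_adj.
    repeat destruct Hs as [Hs|Hs]; destruct Hs; subst; cbn; lia. }
  destruct (cross_exists u v Ha) as [e0 He0]. exists e0.
  split; auto. split; [eapply SB; eauto|]. split.
  - split; [intros [e [Ke Ce]]; rewrite (crosses_unique e e0 u v Ce He0) in Ke; auto|].
    intros K0; exists e0; auto.
  - rewrite (present_iff w e0 u v Hom He0). tauto.
Qed.

Lemma Loc w K x y : in_Omega w -> is_contour w K ->
  (forall u v, side (x,y) u v -> (crossK K u v <-> w u <> w v)) \/
  (forall u v, side (x,y) u v -> ~ crossK K u v).
Proof.
  intros Hom Kc.
  destruct (classic (black x y)) as [Hb|Hw].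
  - destruct (black_edges x y Hb) as [[eh [Fh Dh]] [ev [Fv Dv]]].
    assert (Hdich : forall e0, face_of e0 = (x,y) -> e0 = eh \/ e0 = ev).
    { intros e0 F0. destruct (edge_dir e0) eqn:D0.
      - left; apply face_of_inj; congruence.
      - right; apply face_of_inj; congruence. }
    assert (NB : ~ (present w eh /\ present w ev)).
    { intros [P1 P2]. eapply (not_both_present w eh ev); eauto. congruence. }
    destruct (classic (K eh)) as [Kh|Kh]; destruct (classic (K ev)) as [Kv|Kv].
    + exfalso. apply NB; split; eapply contour_present; eauto.
    + left. intros u v Hs. destruct (black_side_edge w K x y u v Hom Kc Hb Hs) as [e0 [C0 [F0 [I1 I2]]]].
      rewrite I1, I2. destruct (Hdich e0 F0) as [->| ->].
      * split; auto. intros _. eapply contour_present; eauto.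
      * split; [tauto|]. intros P. exfalso. apply NB; split; auto. eapply contour_present; eauto.
    + left. intros u v Hs. destruct (black_side_edge w K x y u v Hom Kc Hb Hs) as [e0 [C0 [F0 [I1 I2]]]].
      rewrite I1, I2. destruct (Hdich e0 F0) as [->| ->].
      * split; [tauto|]. intros P. exfalso. apply NB; split; auto. eapply contour_present; eauto.
      * split; auto. intros _. eapply contour_present; eauto.
    + right. intros u v Hs. destruct (black_side_edge w K x y u v Hom Kc Hb Hs) as [e0 [C0 [F0 [I1 I2]]]].
      rewrite I1. destruct (Hdich e0 F0) as [->| ->]; auto.
  - destruct (classic (exists u0 v0, side (x,y) u0 v0 /\ crossK K u0 v0)) as [[u0 [v0 [S0 [e0 [K0 C0]]]]]|Hn].
    + left. intros u v Hs. split.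
      * intros [e [Ke Ce]]. apply (present_iff w e u v Hom Ce). eapply contour_present; eauto.
      * intros Hd.
        assert (Ha : G_adj u v).
        { unfold side in Hs; cbn [fst snd] in Hs. unfold G_adj.
          repeat destruct Hs as [Hs|Hs]; destruct Hs; subst; cbn; lia. }
        destruct (diff_present w u v Hom Ha Hd) as [e' [P' C']].
        destruct (W0 x y e' u v Hw C' Hs) as [c' [E' W']].
        destruct (W0 x y e0 u0 v0 Hw C0 S0) as [c0 [E0 W0']].
        assert (c0 = c') by (apply wface_inj; congruence). subst c'.
        exists e'. split; auto. eapply contour_closed; eauto. eapply share_end_of_endpoint; eauto.
    + right. intros u v Hs Hc. apply Hn. exists u, v. auto.
Qed.

Fixpoint Ipos (F : Z -> bool) (n : nat) : bool :=
  match n with O => false | S n => xorb (Ipos F n) (F (Z.of_nat n)) end.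
Fixpoint Ineg (F : Z -> bool) (n : nat) : bool :=
  match n with O => false | S n => xorb (Ineg F n) (F (- Z.of_nat n - 1)) end.
Definition Iz (F : Z -> bool) (z : Z) : bool :=
  if Z.leb 0 z then Ipos F (Z.to_nat z) else Ineg F (Z.to_nat (- z)).

Lemma Iz0 F : Iz F 0 = false.
Proof. reflexivity. Qed.

Lemma Iz_step F z : Iz F (z+1) = xorb (Iz F z) (F z).
Proof.
  unfold Iz. destruct (Z.leb_spec 0 z) as [H|H].
  - destruct (Z.leb_spec 0 (z+1)) as [H'|H']; [|lia].
    replace (Z.to_nat (z+1)) with (S (Z.to_nat z)) by lia. cbn [Ipos].
    rewrite Z2Nat.id by lia. reflexivity.
  - destruct (Z.leb_spec 0 (z+1)) as [H'|H'].
    + assert (z = -1) by lia. subst. simpl. destruct (F (-1)); reflexivity.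
    + replace (Z.to_nat (- z)) with (S (Z.to_nat (- (z+1)))) by lia. cbn [Ineg].
      rewrite Z2Nat.id by lia. replace (- (- (z + 1)) - 1) with z by lia.
      destruct (Ineg F (Z.to_nat (- (z + 1)))), (F z); reflexivity.
Qed.

Lemma potential (h vv : Z -> Z -> bool)
  (Hsq : forall x y, xorb (xorb (h x y) (h x (y+1))) (xorb (vv x y) (vv (x+1) y)) = false) :
  exists s : Z -> Z -> bool,
    (forall x y, s (x+1) y = xorb (s x y) (h x y)) /\
    (forall x y, s x (y+1) = xorb (s x y) (vv x y)).
Proof.
  set (s := fun x y => xorb (Iz (fun i => h i 0) x) (Iz (vv x) y)).
  assert (HV : forall x y, s x (y+1) = xorb (s x y) (vv x y)).
  { intros x y. unfold s. rewrite Iz_step.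
    destruct (Iz (fun i => h i 0) x), (Iz (vv x) y), (vv x y); reflexivity. }
  exists s. split; auto.
  intros x. apply Z.peano_ind.
  - unfold s. rewrite !Iz0, Iz_step. destruct (Iz (fun i : Z => h i 0) x), (h x 0); reflexivity.
  - intros y IH. rewrite <- Z.add_1_r. rewrite !HV, IH.
    specialize (Hsq x y).
    destruct (s x y), (h x y), (h x (y+1)), (vv x y), (vv (x+1) y); cbn in *; congruence.
  - intros y IH. rewrite <- Z.sub_1_r.
    specialize (Hsq x (y-1)). replace (y-1+1) with y in Hsq by lia.
    pose proof (HV (x+1) (y-1)) as A. pose proof (HV x (y-1)) as B.
    replace (y-1+1) with y in A, B by lia.
    rewrite IH in A. rewrite B in A.
    destruct (s x (y-1)), (s (x+1) (y-1)), (h x (y-1)), (h x y), (vv x (y-1)), (vv (x+1) (y-1));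
      cbn in *; congruence.
Qed.

Definition pb (P : vtx -> vtx -> Prop) (u v : vtx) : bool :=
  if excluded_middle_informative (P u v) then true else false.

Lemma pb_true P u v : pb P u v = true <-> P u v.
Proof. unfold pb. destruct (excluded_middle_informative (P u v)); split; auto; discriminate. Qed.

Lemma pb_false P u v : pb P u v = false <-> ~ P u v.
Proof. unfold pb. destruct (excluded_middle_informative (P u v)); split; auto; try discriminate; tauto. Qed.

Lemma potential_general (col : vtx -> bool) (P : vtx -> vtx -> Prop)
  (Psym : forall u v, P u v -> P v u)
  (Hloc : forall x y, (forall u v, side (x,y) u v -> (P u v <-> col u <> col v)) \/
                      (forall u v, side (x,y) u v -> ~ P u v)) :
  exists s : vtx -> bool, forall u v, G_adj u v -> (s u <> s v <-> P u v).
Proof.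
  set (h := fun x y => pb P (x,y) (x+1,y)).
  set (vv := fun x y => pb P (x,y) (x,y+1)).
  assert (Hsq : forall x y, xorb (xorb (h x y) (h x (y+1))) (xorb (vv x y) (vv (x+1) y)) = false).
  { intros x y. unfold h, vv. destruct (Hloc x y) as [HA|HB].
    - assert (E : forall u v, side (x,y) u v -> pb P u v = xorb (col u) (col v)).
      { intros u v Hs. specialize (HA u v Hs).
        destruct (pb P u v) eqn:E1.
        - apply pb_true in E1. apply HA in E1. destruct (col u), (col v); tauto.
        - apply pb_false in E1. destruct (col u), (col v); try reflexivity; exfalso; apply E1, HA; discriminate. }
      rewrite !E by (unfold side; cbn [fst snd]; tauto).
      destruct (col (x,y)), (col (x+1,y)), (col (x,y+1)), (col (x+1,y+1)); reflexivity.
    - rewrite !(proj2 (pb_false _ _ _)) by (apply HB; unfold side; cbn [fst snd]; tauto).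
      reflexivity. }
  destruct (potential h vv Hsq) as [s [Hh Hv]].
  exists (fun p => s (fst p) (snd p)).
  intros [x y] [x' y'] Ha. cbn [fst snd].
  assert (key : forall a b, b = xorb a true -> a <> b).
  { intros a b ->; destruct a; discriminate. }
  assert (key2 : forall a c, (a <> xorb a c) <-> c = true).
  { intros a c; destruct a, c; cbn; split; congruence. }
  destruct (G_adj_cases _ _ _ _ Ha) as [[-> ->]|[[-> ->]|[[-> ->]|[-> ->]]]].
  - rewrite Hh, key2. unfold h. apply pb_true.
  - replace x with (x-1+1) at 1 by lia. rewrite Hh.
    split.
    + intros H. assert (h (x-1) y = true) by (destruct (s (x-1) y), (h (x-1) y); cbn in *; congruence).
      unfold h in H0. apply pb_true in H0. replace (x-1+1) with x in H0 by lia. auto.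
    + intros HP. assert (h (x-1) y = true).
      { unfold h. apply pb_true. replace (x-1+1) with x by lia. auto. }
      rewrite H. destruct (s (x-1) y); discriminate.
  - rewrite Hv, key2. unfold vv. apply pb_true.
  - replace y with (y-1+1) at 1 by lia. rewrite Hv.
    split.
    + intros H. assert (vv x (y-1) = true) by (destruct (s x (y-1)), (vv x (y-1)); cbn in *; congruence).
      unfold vv in H0. apply pb_true in H0. replace (y-1+1) with y in H0 by lia. auto.
    + intros HP. assert (vv x (y-1) = true).
      { unfold vv. apply pb_true. replace (y-1+1) with y by lia. auto. }
      rewrite H. destruct (s x (y-1)); discriminate.
Qed.

Definition crt_in (P : vtx -> Prop) : relation vtx :=
  clos_refl_trans vtx (fun a b => G_adj a b /\ P a /\ P b).

Lemma crt_in_sym P u v : crt_in P u v -> crt_in P v u.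
Proof.
  induction 1.
  - apply rt_step. destruct H as [H1 [H2 H3]]. split; auto. apply G_adj_sym; auto.
  - apply rt_refl.
  - eapply rt_trans; eauto.
Qed.

Lemma crt_in_mono (P P' : vtx -> Prop) u v : (forall x, P x -> P' x) -> crt_in P u v -> crt_in P' u v.
Proof.
  intros HP. induction 1.
  - apply rt_step. destruct H as [H1 [H2 H3]]. auto.
  - apply rt_refl.
  - eapply rt_trans; eauto.
Qed.

Lemma crt_in_trans P u v z : crt_in P u v -> crt_in P v z -> crt_in P u z.
Proof. apply rt_trans. Qed.

Lemma crt_in_end P u v : crt_in P u v -> P u -> P v.
Proof. induction 1; intuition. Qed.

Lemma crt_in_step P u v : G_adj u v -> P u -> P v -> crt_in P u v.
Proof. intros; apply rt_step; auto. Qed.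

Lemma line_h_nat P (n : nat) x y : (forall t, x <= t <= x + Z.of_nat n -> P (t,y)) ->
  crt_in P (x,y) (x + Z.of_nat n, y).
Proof.
  induction n as [|n IH]; intros H.
  - replace (x + Z.of_nat 0) with x by lia. apply rt_refl.
  - eapply rt_trans.
    + apply IH. intros t Ht. apply H. lia.
    + apply rt_step. split; [unfold G_adj; cbn; lia|]. split; apply H; lia.
Qed.

Lemma line_h P x1 x2 y : (forall t, Z.min x1 x2 <= t <= Z.max x1 x2 -> P (t,y)) ->
  crt_in P (x1,y) (x2,y).
Proof.
  intros H. destruct (Z.le_ge_cases x1 x2) as [Hle|Hge].
  - pose proof (line_h_nat P (Z.to_nat (x2 - x1)) x1 y) as L.
    rewrite Z2Nat.id in L by lia. replace (x1 + (x2 - x1)) with x2 in L by lia.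
    apply L. intros t Ht; apply H; lia.
  - apply crt_in_sym.
    pose proof (line_h_nat P (Z.to_nat (x1 - x2)) x2 y) as L.
    rewrite Z2Nat.id in L by lia. replace (x2 + (x1 - x2)) with x1 in L by lia.
    apply L. intros t Ht; apply H; lia.
Qed.

Lemma line_v_nat P (n : nat) x y : (forall t, y <= t <= y + Z.of_nat n -> P (x,t)) ->
  crt_in P (x,y) (x, y + Z.of_nat n).
Proof.
  induction n as [|n IH]; intros H.
  - replace (y + Z.of_nat 0) with y by lia. apply rt_refl.
  - eapply rt_trans.
    + apply IH. intros t Ht. apply H. lia.
    + apply rt_step. split; [unfold G_adj; cbn; lia|]. split; apply H; lia.
Qed.

Lemma line_v P x y1 y2 : (forall t, Z.min y1 y2 <= t <= Z.max y1 y2 -> P (x,t)) ->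
  crt_in P (x,y1) (x,y2).
Proof.
  intros H. destruct (Z.le_ge_cases y1 y2) as [Hle|Hge].
  - pose proof (line_v_nat P (Z.to_nat (y2 - y1)) x y1) as L.
    rewrite Z2Nat.id in L by lia. replace (y1 + (y2 - y1)) with y2 in L by lia.
    apply L. intros t Ht; apply H; lia.
  - apply crt_in_sym.
    pose proof (line_v_nat P (Z.to_nat (y1 - y2)) x y2) as L.
    rewrite Z2Nat.id in L by lia. replace (y2 + (y1 - y2)) with y1 in L by lia.
    apply L. intros t Ht; apply H; lia.
Qed.

Lemma all_connected u v : crt_in (fun _ => True) u v.
Proof.
  destruct u as [x y], v as [x' y'].
  apply rt_trans with (x', y); [apply line_h | apply line_v]; auto.
Qed.

Definition Out (N : Z) (v : vtx) : Prop := N < Z.abs (fst v) \/ N < Z.abs (snd v).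

Lemma out_to_corner N v : 0 <= N -> Out N v -> crt_in (Out N) v (N+1, N+1).
Proof.
  intros HN. destruct v as [x y]. unfold Out; cbn [fst snd]. intros [Hx|Hy].
  - apply rt_trans with (x, N+1).
    + apply line_v. intros t _. left; cbn; lia.
    + apply line_h. intros t _. right; cbn; lia.
  - apply rt_trans with (N+1, y).
    + apply line_h. intros t _. right; cbn; lia.
    + apply line_v. intros t _. left; cbn; lia.
Qed.

Lemma out_connected N u v : 0 <= N -> Out N u -> Out N v -> crt_in (Out N) u v.
Proof.
  intros HN Hu Hv. eapply rt_trans; [apply out_to_corner; eauto|].
  apply crt_in_sym, out_to_corner; auto.
Qed.

Lemma finite_bounded (C : vtx -> Prop) : finite_set C ->
  exists N, 0 <= N /\ forall v, C v -> Z.abs (fst v) <= N /\ Z.abs (snd v) <= N.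
Proof.
  intros [l Hl].
  assert (H : exists N, 0 <= N /\ forall v, In v l -> Z.abs (fst v) <= N /\ Z.abs (snd v) <= N).
  { clear Hl. induction l as [|a l IH].
    - exists 0. split; [lia|]. intros v [].
    - destruct IH as [N [HN H]]. exists (N + Z.abs (fst a) + Z.abs (snd a)).
      split; [lia|]. intros v [<-|Hv]; [lia|]. specialize (H v Hv). lia. }
  destruct H as [N [HN H]]. exists N. split; auto.
Qed.

Definition zr (N : Z) : list Z := map (fun k => Z.of_nat k - N) (seq 0 (Z.to_nat (2*N+1))).

Lemma in_zr N z : 0 <= N -> Z.abs z <= N -> In z (zr N).
Proof.
  intros HN Hz. unfold zr. apply in_map_iff. exists (Z.to_nat (z + N)).
  split; [rewrite Z2Nat.id by lia; lia|]. apply in_seq. lia.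
Qed.

Lemma infinite_out (X : vtx -> Prop) N : 0 <= N -> infinite_set X -> exists x, X x /\ Out N x.
Proof.
  intros HN Hinf. apply NNPP. intros Hn. apply Hinf.
  exists (list_prod (zr N) (zr N)). intros [x y] Hx.
  apply in_prod; apply in_zr; auto;
  destruct (classic (N < Z.abs x)) as [h|h]; try (exfalso; apply Hn; exists (x,y); split; auto; left; cbn; lia);
  destruct (classic (N < Z.abs y)) as [h'|h']; try (exfalso; apply Hn; exists (x,y); split; auto; right; cbn; lia);
  lia.
Qed.

Lemma min_nat (P : nat -> Prop) : (exists n, P n) -> exists n, P n /\ forall m, (m < n)%nat -> ~ P m.
Proof.
  intros [n Hn]. revert Hn. induction n as [n IH] using (well_founded_induction lt_wf).
  intros Hn. destruct (classic (exists m, (m < n)%nat /\ P m)) as [[m [Hm Pm]]|H].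
  - exact (IH m Hm Pm).
  - exists n. split; auto. intros m Hm Pm. apply H; eauto.
Qed.

Section W.
Variable w : config.

Lemma mono_sym u v : mono_step w u v -> mono_step w v u.
Proof. intros [H1 H2]; split; auto; apply G_adj_sym; auto. Qed.

Lemma sc_sym u v : same_cluster w u v -> same_cluster w v u.
Proof.
  induction 1; [apply rt_step; apply mono_sym; auto | apply rt_refl | eapply rt_trans; eauto].
Qed.

Lemma sc_trans u v z : same_cluster w u v -> same_cluster w v z -> same_cluster w u z.
Proof. apply rt_trans. Qed.

Lemma sc_color u v : same_cluster w u v -> w u = w v.
Proof. induction 1; [destruct H; auto | auto | congruence]. Qed.

Lemma sc_path_in v a b : same_cluster w a b -> same_cluster w v a -> crt_in (same_cluster w v) a b.
Proof.
  induction 1 as [a b H| a | a b c H1 IH1 H2 IH2]; intros Hva.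
  - apply rt_step. pose proof H as H'. destruct H' as [Ha _]. split; auto. split; auto.
    eapply rt_trans; [exact Hva| apply rt_step; auto].
  - apply rt_refl.
  - eapply rt_trans; [apply IH1; auto| apply IH2]. eapply rt_trans; eauto.
Qed.

Lemma cluster_conn b C : is_b_cluster w b C -> forall x y, C x -> C y -> crt_in C x y.
Proof.
  intros [v [_ HC]] x y Hx Hy. apply HC in Hx, Hy.
  assert (E : forall z, crt_in (same_cluster w v) v z -> crt_in C v z).
  { intros z. apply crt_in_mono. intros t; apply HC. }
  eapply rt_trans; [apply crt_in_sym|]; apply E; apply sc_path_in; auto; apply rt_refl.
Qed.

Lemma cluster_color b C x : is_b_cluster w b C -> C x -> w x = b.
Proof. intros [v [Hv HC]] Hx. apply HC in Hx. apply sc_color in Hx. congruence. Qed.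

Lemma cluster_of_mem b C x : is_b_cluster w b C -> C x -> forall y, C y <-> same_cluster w x y.
Proof.
  intros [v [Hv HC]] Hx y. rewrite HC. apply HC in Hx. split; intros H.
  - eapply rt_trans; [apply sc_sym; eauto | auto].
  - eapply rt_trans; eauto.
Qed.

Lemma cluster_of x : is_b_cluster w (w x) (same_cluster w x).
Proof. exists x. split; auto. tauto. Qed.

Variable x0 : vtx.

Inductive Reach : nat -> vtx -> Prop :=
 | R0 : Reach 0 x0
 | Rmono k u v : Reach k u -> mono_step w u v -> Reach k v
 | Rlift k u : Reach k u -> Reach (S k) u
 | Rstep k u v : Reach k u -> G_adj u v -> Reach (S k) v.

Lemma Reach_le k m u : (k <= m)%nat -> Reach k u -> Reach m u.
Proof. induction 1; auto. intros; apply Rlift; auto. Qed.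

Lemma Reach_sc k u v : Reach k u -> same_cluster w u v -> Reach k v.
Proof. intros Hu H. revert Hu. induction H; eauto using Rmono. Qed.

Lemma Reach0 v : Reach 0 v <-> same_cluster w x0 v.
Proof.
  split.
  - intros H. remember 0%nat as k. induction H.
    + apply rt_refl.
    + eapply rt_trans; [apply IHReach; auto| apply rt_step; auto].
    + discriminate.
    + discriminate.
  - intros H. eapply Reach_sc; [apply R0| auto].
Qed.

Lemma Reach_path k v : Reach k v -> crt_in (Reach k) x0 v.
Proof.
  induction 1.
  - apply rt_refl.
  - eapply rt_trans; [eauto|]. apply rt_step. split; [destruct H0; auto|].
    split; auto. eapply Rmono; eauto.
  - eapply crt_in_mono; [|eauto]. intros; apply Rlift; auto.
  - eapply rt_trans.
    + eapply crt_in_mono; [|eauto]. intros; apply Rlift; auto.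
    + apply rt_step. split; auto. split; [apply Rlift; auto| eapply Rstep; eauto].
Qed.

Lemma Reach_D4 k v : Reach (S k) v -> Reach k v \/ exists a b, Reach k a /\ G_adj a b /\ same_cluster w b v.
Proof.
  intros H. remember (S k) as m. revert k Heqm. induction H; intros k' E.
  - discriminate.
  - destruct (IHReach k' E) as [H1|[a [b [H1 [H2 H3]]]]].
    + left. eapply Rmono; eauto.
    + right. exists a, b. repeat split; auto. eapply rt_trans; [eauto| apply rt_step; auto].
  - injection E as ->. left; auto.
  - injection E as ->. right. exists u, v. repeat split; auto. apply rt_refl.
Qed.

Lemma Reach_exists v : exists k, Reach k v.
Proof.
  pose proof (all_connected x0 v) as H. unfold crt_in in H.
  apply clos_rt_rtn1_iff in H. induction H as [|y z Hyz Hp IH].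
  - exists 0%nat. apply R0.
  - destruct IH as [k Hk]. exists (S k). eapply Rstep; eauto. destruct Hyz; auto.
Qed.

End W.

Lemma side_adj Q u v : side Q u v -> G_adj u v.
Proof.
  destruct Q as [x y]. unfold side; cbn [fst snd]. unfold G_adj.
  intros Hs; repeat destruct Hs as [Hs|Hs]; destruct Hs; subst; cbn; lia.
Qed.

Definition bP (S : vtx -> Prop) (x : vtx) : bool :=
  if excluded_middle_informative (S x) then true else false.

Lemma bP_neq S u v : bP S u <> bP S v <-> (S u <-> ~ S v).
Proof.
  unfold bP. destruct (excluded_middle_informative (S u)), (excluded_middle_informative (S v));
  split; intros; try tauto; try congruence.
Qed.

Lemma const_on (s : vtx -> bool) (P : vtx -> vtx -> Prop) (S : vtx -> Prop) u v :
  (forall x y, G_adj x y -> (s x <> s y <-> P x y)) ->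
  (forall x y, S x -> S y -> ~ P x y) ->
  crt_in S u v -> s u = s v.
Proof.
  intros Hs HP. induction 1 as [x y [H1 [H2 H3]]| |]; [|auto|congruence].
  destruct (s x) eqn:E1, (s y) eqn:E2; auto; exfalso; apply (HP x y H2 H3); apply Hs; auto; rewrite E1, E2; discriminate.
Qed.

Lemma LK w K (S : vtx -> Prop) : in_Omega w -> is_contour w K ->
  (forall u v, S u -> S v -> crt_in S u v) ->
  (forall u v, ~ S u -> ~ S v -> crt_in (fun x => ~ S x) u v) ->
  (forall u v, G_adj u v -> S u -> ~ S v -> w u <> w v) ->
  forall a b c d, G_adj a b -> S a -> ~ S b -> G_adj c d -> S c -> ~ S d ->
  crossK K a b -> crossK K c d.
Proof.
  intros Hom Kc HS HSc Hbd a b c d Hab Sa Sb Hcd Sc Sd Kab.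
  set (P := fun u v => crossK K u v /\ (S u <-> ~ S v)).
  assert (Psym : forall u v, P u v -> P v u).
  { intros u v [H1 H2]. split; [apply crossK_sym; auto|].
    split; intros H; [intros H'; apply H2 in H'; auto|].
    apply NNPP; intros H'; apply H; apply H2; auto. }
  assert (Hloc : forall x y, (forall u v, side (x,y) u v -> (P u v <-> bP S u <> bP S v)) \/
                             (forall u v, side (x,y) u v -> ~ P u v)).
  { intros x y. destruct (Loc w K x y Hom Kc) as [HA|HB].
    - left. intros u v Hs. rewrite bP_neq. unfold P. split; [tauto|].
      intros Hd. split; auto. apply (HA u v Hs).
      destruct (classic (S u)) as [Su|Su].
      + apply Hbd; auto. eapply side_adj; eauto. apply Hd; auto.
      + intros E. apply (Hbd v u); auto.
        * apply G_adj_sym; eapply side_adj; eauto.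
        * apply NNPP; intros Sv; apply Su; apply Hd; auto.
    - right. intros u v Hs [H _]. apply (HB u v Hs); auto. }
  destruct (potential_general (bP S) P Psym Hloc) as [s Hs].
  assert (E1 : s a = s c).
  { eapply const_on; eauto. intros x y Sx Sy [_ H]. apply H in Sx; auto. }
  assert (E2 : s b = s d).
  { eapply const_on with (S := fun x => ~ S x); eauto. intros x y Sx Sy [_ H].
    apply Sy. apply NNPP; intros Sy'. apply Sx. apply H. auto. }
  assert (Pab : P a b) by (split; [auto| tauto]).
  apply Hs in Pab; auto.
  assert (Pcd : P c d) by (apply Hs; auto; congruence).
  destruct Pcd; auto.
Qed.

Section A.
Variable w : config.
Variable K : edge -> Prop.
Hypothesis Hom : in_Omega w.
Hypothesis Kc : is_contour w K.

Definition kstep (x y : vtx) : Prop := G_adj x y /\ (w x = w y \/ crossK K x y).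
Definition KP := clos_refl_trans vtx kstep.

Lemma kstep_sym x y : kstep x y -> kstep y x.
Proof. intros [H1 [H2|H2]]; split; [apply G_adj_sym; auto| left; auto | apply G_adj_sym; auto | right; apply crossK_sym; auto]. Qed.

Lemma KP_sym x y : KP x y -> KP y x.
Proof. induction 1; [apply rt_step, kstep_sym; auto| apply rt_refl| eapply rt_trans; eauto]. Qed.

Lemma crossK_diff x y : crossK K x y -> w x <> w y.
Proof. intros [e [Ke Ce]]. apply (present_iff w e x y Hom Ce). eapply contour_present; eauto. Qed.

Lemma side_black_kstep e u v : K e -> side (face_of e) u v -> kstep u v.
Proof.
  intros Ke Hs. split; [eapply side_adj; eauto|].
  destruct (bool_dec (w u) (w v)) as [E|E]; [left; auto| right].
  destruct (diff_present w u v Hom (side_adj _ _ _ Hs) E) as [e' [P' C']].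
  exists e'. split; auto.
  pose proof (face_black e) as Hb. destruct (face_of e) as [m n] eqn:F. cbn [fst snd] in Hb.
  pose proof (SB m n e' u v Hb C' Hs) as F'.
  destruct (edge_dir e) eqn:D; destruct (edge_dir e') eqn:D'.
  - rewrite (face_of_inj e' e); auto; congruence.
  - exfalso. apply (not_both_present w e e' Hom); auto; [congruence| eapply contour_present; eauto].
  - exfalso. apply (not_both_present w e' e Hom); auto; [congruence| eapply contour_present; eauto].
  - rewrite (face_of_inj e' e); auto; congruence.
Qed.

Lemma side_white_kstep e c u v : K e -> endpoint c e -> side (wface c) u v -> kstep u v.
Proof.
  intros Ke Ec Hs. split; [eapply side_adj; eauto|].
  destruct (bool_dec (w u) (w v)) as [E|E]; [left; auto| right].
  destruct (diff_present w u v Hom (side_adj _ _ _ Hs) E) as [e' [P' C']].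
  exists e'. split; auto.
  pose proof (wface_white c) as Hw. destruct (wface c) as [x y] eqn:Wc. cbn [fst snd] in Hw.
  destruct (W0 x y e' u v Hw C' Hs) as [c' [E' W']].
  assert (c' = c) by (apply wface_inj; congruence). subst c'.
  eapply contour_closed; eauto. eapply share_end_of_endpoint; eauto.
Qed.

Lemma square_conn Q u v : (forall a b, side Q a b -> kstep a b) -> corner Q u -> corner Q v -> KP u v.
Proof.
  destruct Q as [x y]. intros Hs.
  assert (Hc : forall z, corner (x,y) z -> KP (x,y) z).
  { intros z Hz. unfold corner in Hz; cbn [fst snd] in Hz.
    destruct Hz as [ -> | [ -> | [ -> | -> ]]].
    - apply rt_refl.
    - apply rt_step, Hs. unfold side; cbn. tauto.
    - apply rt_step, Hs. unfold side; cbn. tauto.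
    - eapply rt_trans; apply rt_step, Hs; unfold side; cbn; [left|]; eauto; tauto. }
  intros Hu Hv. eapply rt_trans; [apply KP_sym, Hc; auto| apply Hc; auto].
Qed.

Lemma share_end_common e f : share_end e f -> exists c, endpoint c e /\ endpoint c f.
Proof.
  unfold share_end, endpoint. destruct (edge_ends e) as [p q], (edge_ends f) as [p' q'].
  cbn [fst snd]. intros [H|[H|[H|H]]]; subst; eauto.
Qed.

Definition nearK (u : vtx) : Prop := exists e, K e /\ corner (face_of e) u.

Lemma lemmaA u v : nearK u -> nearK v -> KP u v.
Proof.
  destruct Kc as [e0 [P0 HK]].
  set (u0 := face_of e0).
  assert (Main : forall f, clos_refl_trans edge (contour_step w) e0 f -> present w f ->
                   forall z, corner (face_of f) z -> KP u0 z).
  { intros f Hf. apply clos_rt_rtn1_iff in Hf. induction Hf as [|g h Hgh Hp IH].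
    - intros _ z Hz. apply (square_conn (face_of e0)); [|left; reflexivity| auto].
      intros a b Hs. eapply side_black_kstep; eauto. apply HK; split; auto. apply rt_refl.
    - intros Ph z Hz. destruct Hgh as [Pg [_ Hs]].
      assert (Kg : K g) by (apply HK; split; auto; apply clos_rt_rtn1_iff; auto).
      assert (Kh : K h) by (eapply contour_closed; eauto).
      destruct (share_end_common g h Hs) as [c [Eg Eh]].
      destruct (Wend c g Eg) as [u1 [U1a U1b]].
      destruct (Wend c h Eh) as [u2 [U2a U2b]].
      eapply rt_trans; [apply (IH Pg u1 U1a)|].
      eapply rt_trans; [apply (square_conn (wface c) u1 u2); auto; intros a b Hs'; eapply side_white_kstep; eauto|].
      apply (square_conn (face_of h)); auto. intros a b Hs'; eapply side_black_kstep; eauto. }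
  intros [e [Ke Ce]] [f [Kf Cf]].
  apply HK in Ke, Kf.
  eapply rt_trans; [apply KP_sym; apply (Main e); tauto| apply (Main f); tauto].
Qed.

Lemma potK : exists s : vtx -> bool, forall u v, G_adj u v -> (s u <> s v <-> crossK K u v).
Proof.
  apply (potential_general w (crossK K)); [apply crossK_sym|].
  intros x y. apply Loc; auto.
Qed.

Lemma KP_inv (s : vtx -> bool) (Hs : forall u v, G_adj u v -> (s u <> s v <-> crossK K u v)) u v :
  KP u v -> xorb (w u) (s u) = xorb (w v) (s v).
Proof.
  induction 1 as [x y [Ha Hk]| |]; [|auto|congruence].
  assert (E : crossK K x y <-> w x <> w y).
  { split; [apply crossK_diff|]. intros D. destruct Hk as [Hk|Hk]; [congruence|auto]. }
  specialize (Hs x y Ha). rewrite E in Hs. revert Hs.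
  destruct (w x), (w y), (s x), (s y); cbn; intros [H1 H2]; try reflexivity; exfalso;
  first [ exact (H2 ltac:(discriminate) eq_refl) | exact (H1 ltac:(discriminate) eq_refl) ].
Qed.

End A.

Lemma int01 (z : Z) : (0 <= IZR z <= 1)%R -> z = 0 \/ z = 1.
Proof. intros [H1 H2]. apply le_IZR in H1. apply le_IZR in H2. lia. Qed.

Lemma int01' (z : Z) : (-1 < IZR z < 2)%R -> z = 0 \/ z = 1.
Proof. intros [H1 H2]. apply lt_IZR in H1. apply lt_IZR in H2. lia. Qed.

Lemma core (i j m n : Z) (f : R -> R) :
  (forall t, f t = (IZR i - IZR m + /2 - 2*t)^2 + (IZR j - IZR n - /2)^2)%R ->
  ((exists t, 0 <= t <= 1 /\ f t = /4) /\ (forall t, 0 <= t <= 1 -> /4 <= f t))%R <->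
  (i = m \/ i = m+1) /\ (j = n \/ j = n+1).
Proof.
  intros E. split.
  - intros [[t [[H0 H1] Ht]] _]. rewrite E in Ht.
    assert (Hy2 : ((IZR j - IZR n - /2)^2 <= /4)%R).
    { pose proof (pow2_ge_0 (IZR i - IZR m + /2 - 2*t)). lra. }
    assert (Hy : (0 <= IZR (j - n) <= 1)%R).
    { rewrite minus_IZR. set (Y := (IZR j - IZR n)%R) in *.
      assert (Hq : (Y * (Y - 1) <= 0)%R) by nra.
      split; [destruct (Rle_or_lt 0 Y); auto; nra| destruct (Rle_or_lt Y 1); auto; nra]. }
    destruct (int01 _ Hy) as [Hj|Hj];
    (assert (Hyy : ((IZR j - IZR n - /2)^2 = /4)%R) by
       (replace (IZR j) with (IZR (j - n) + IZR n)%R by (rewrite minus_IZR; ring); rewrite Hj; cbn; field));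
    (assert (Hx : (IZR i - IZR m + /2 - 2*t = 0)%R) by nra);
    (assert (Hi : (-1 < IZR (i - m) < 2)%R) by (rewrite minus_IZR; lra));
    destruct (int01' _ Hi); split; lia.
  - intros [Hi Hj].
    assert (Hyy : ((IZR j - IZR n - /2)^2 = /4)%R).
    { destruct Hj as [->| ->]; [|rewrite plus_IZR]; field. }
    split.
    + destruct Hi as [->| ->].
      * exists (/4)%R. split; [lra|]. rewrite E, Hyy. field.
      * exists (3/4)%R. split; [lra|]. rewrite E, Hyy, plus_IZR. field.
    + intros t _. rewrite E, Hyy. pose proof (pow2_ge_0 (IZR i - IZR m + /2 - 2*t)). lra.
Qed.

Lemma core_v (i j m n : Z) (f : R -> R) :
  (forall t, f t = (IZR i - IZR m - /2)^2 + (IZR j - IZR n + /2 - 2*t)^2)%R ->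
  ((exists t, 0 <= t <= 1 /\ f t = /4) /\ (forall t, 0 <= t <= 1 -> /4 <= f t))%R <->
  (i = m \/ i = m+1) /\ (j = n \/ j = n+1).
Proof.
  intros E. rewrite (core j i n m f); [tauto|]. intros t. rewrite E. ring.
Qed.

Lemma seg_corner e v :
  dist_seg_half (vtx_pos v) (lvtx_pos (fst (edge_ends e))) (lvtx_pos (snd (edge_ends e))) <->
  corner (face_of e) v.
Proof.
  destruct v as [i j]. unfold dist_seg_half, corner.
  assert (C : forall m n, (i = m \/ i = m+1) /\ (j = n \/ j = n+1) <->
     (i,j) = (m,n) \/ (i,j) = (m,n+1) \/ (i,j) = (m+1,n) \/ (i,j) = (m+1,n+1)).
  { intros m n. split.
    - intros [[->| ->] [->| ->]]; tauto.
    - intros H; repeat destruct H as [H|H]; apply pair_eq in H; lia. }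
  destruct e as [[|] a b [|]]; cbn [edge_ends face_of fst snd lvtx_pos vtx_pos].
  - rewrite <- C. apply core. intros t. unfold dist2, seg_point; cbn [fst snd].
    unfold vtx_pos; cbn [fst snd]. repeat rewrite ?plus_IZR, ?minus_IZR, ?mult_IZR. field.
  - rewrite <- C. apply core_v. intros t. unfold dist2, seg_point; cbn [fst snd].
    unfold vtx_pos; cbn [fst snd]. repeat rewrite ?plus_IZR, ?minus_IZR, ?mult_IZR. field.
  - rewrite <- C. apply core. intros t. unfold dist2, seg_point; cbn [fst snd].
    unfold vtx_pos; cbn [fst snd]. repeat rewrite ?plus_IZR, ?minus_IZR, ?mult_IZR. field.
  - rewrite <- C. apply core_v. intros t. unfold dist2, seg_point; cbn [fst snd].
    unfold vtx_pos; cbn [fst snd]. repeat rewrite ?plus_IZR, ?minus_IZR, ?mult_IZR. field.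
Qed.

Lemma incident_iff C K : incident C K <-> exists v, C v /\ nearK K v.
Proof.
  unfold incident, nearK. split.
  - intros [v [e [Cv [Ke D]]]]. exists v. split; auto. exists e. split; auto. apply seg_corner; auto.
  - intros [v [Cv [e [Ke D]]]]. exists v, e. split; [auto| split; [auto| apply seg_corner; auto]].
Qed.

Lemma cstep_sym w e f : contour_step w e f -> contour_step w f e.
Proof. intros [H1 [H2 H3]]. repeat split; auto. apply share_end_sym; auto. Qed.

Lemma crt_edge_sym w e f : clos_refl_trans edge (contour_step w) e f -> clos_refl_trans edge (contour_step w) f e.
Proof. induction 1; [apply rt_step, cstep_sym; auto| apply rt_refl| eapply rt_trans; eauto]. Qed.

Lemma contour_same w K K' e : is_contour w K -> is_contour w K' -> K e -> K' e -> same_set K' K.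
Proof.
  intros [e0 [P0 H]] [e0' [P0' H']] Ke Ke' f.
  rewrite H, H'. apply H in Ke. apply H' in Ke'. destruct Ke as [_ A], Ke' as [_ B].
  split; intros [Pf C]; split; auto.
  - eapply rt_trans; [exact A|]. eapply rt_trans; [apply crt_edge_sym; exact B| exact C].
  - eapply rt_trans; [exact B|]. eapply rt_trans; [apply crt_edge_sym; exact A| exact C].
Qed.

Lemma prefix_in P x0 u : crt_in P x0 u -> crt_in (crt_in P x0) x0 u.
Proof.
  intros H. apply clos_rt_rtn1_iff in H. induction H as [|y z Hyz Hp IH].
  - apply rt_refl.
  - eapply rt_trans; [exact IH|]. apply rt_step. destruct Hyz as [A [B C]].
    split; auto. split; [apply clos_rt_rtn1_iff; auto|].
    eapply rt_trans; [apply clos_rt_rtn1_iff; exact Hp| apply rt_step; auto].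
Qed.

Lemma const_on_KP w K K' (Hom : in_Omega w) (Kc : is_contour w K) (s : vtx -> bool)
  (Hs : forall u v, G_adj u v -> (s u <> s v <-> crossK K u v))
  (Hdis : forall e, K e -> K' e -> False) u v :
  KP w K' u v -> s u = s v.
Proof.
  induction 1 as [x y [Ha Hk]| |]; [|auto|congruence].
  destruct (s x) eqn:E1, (s y) eqn:E2; auto; exfalso;
  (assert (Hc : crossK K x y) by (apply Hs; auto; rewrite E1, E2; discriminate));
  pose proof (crossK_diff w K Hom Kc x y Hc) as D;
  (destruct Hk as [Hk|[e' [K'e' C']]]; [congruence|]);
  destruct Hc as [e [Ke Ce]]; rewrite (crosses_unique e e' x y Ce C') in Ke; eauto.
Qed.

Lemma cluster_no_cross w K b C (Hom : in_Omega w) (Kc : is_contour w K) (HC : is_b_cluster w b C) :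
  forall x y, C x -> C y -> ~ crossK K x y.
Proof.
  intros x y Cx Cy Hc. apply (crossK_diff w K Hom Kc x y Hc).
  rewrite (cluster_color w b C x HC Cx), (cluster_color w b C y HC Cy). reflexivity.
Qed.

Lemma toC_gen (C' : vtx -> Prop) (x0 : vtx) : ~ C' x0 -> forall v,
  ~ crt_in (fun v => ~ C' v) x0 v ->
  exists c, C' c /\ crt_in (fun x => ~ crt_in (fun v => ~ C' v) x0 x) v c.
Proof.
  intros nC v NUv.
  pose proof (all_connected v x0) as P. unfold crt_in in P. apply clos_rt_rt1n_iff in P.
  induction P as [v|v v1 z Hvv1 P IH].
  - exfalso. apply NUv. apply rt_refl.
  - destruct (classic (C' v)) as [Cv|Cv]; [exists v; split; auto; apply rt_refl|].
    assert (NUv1 : ~ crt_in (fun v => ~ C' v) z v1).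
    { intros Uv1. apply NUv. eapply rt_trans; [exact Uv1|]. apply rt_step.
      split; [apply G_adj_sym; destruct Hvv1; auto|]. split; auto.
      apply (crt_in_end _ _ _ Uv1 nC). }
    destruct (IH nC NUv1) as [c [Cc Pc]]. exists c. split; auto.
    eapply rt_trans; [|exact Pc]. apply rt_step. split; [destruct Hvv1; auto| auto].
Qed.

Section Main.
Variable w : config.
Variables xi0 xi1 : vtx -> Prop.
Hypothesis Hom : in_Omega w.
Hypothesis C0 : is_b_cluster w false xi0.
Hypothesis I0 : infinite_set xi0.
Hypothesis U0 : forall C, is_b_cluster w false C -> infinite_set C -> same_set C xi0.
Hypothesis C1 : is_b_cluster w true xi1.
Hypothesis I1 : infinite_set xi1.
Hypothesis U1 : forall C, is_b_cluster w true C -> infinite_set C -> same_set C xi1.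

Lemma avoid_finite (C : vtx -> Prop) : finite_set C ->
  (forall v, C v -> ~ xi0 v) -> (forall v, C v -> ~ xi1 v) ->
  forall x y, xi0 x -> xi1 y -> crt_in (fun v => ~ C v) x y.
Proof.
  intros Fin D0 D1 x y Hx Hy.
  destruct (finite_bounded C Fin) as [N [HN HB]].
  destruct (infinite_out xi0 N HN I0) as [o0 [X0 O0]].
  destruct (infinite_out xi1 N HN I1) as [o1 [X1 O1]].
  assert (OutC : forall v, Out N v -> ~ C v).
  { intros v Ov Cv. destruct (HB v Cv). destruct Ov; lia. }
  apply rt_trans with o0; [| apply rt_trans with o1].
  - apply (crt_in_mono xi0); [intros v Xv Cv; eapply D0; eauto|].
    apply (cluster_conn w false); auto.
  - apply (crt_in_mono (Out N)); auto. apply out_connected; auto.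
  - apply (crt_in_mono xi1); [intros v Xv Cv; eapply D1; eauto|].
    apply (cluster_conn w true); auto.
Qed.

Variable x0 : vtx.
Hypothesis Hx0 : forall x, xi0 x <-> same_cluster w x0 x.
Hypothesis Wx0 : w x0 = false.

Lemma xi0_reach0 v : xi0 v <-> Reach w x0 0 v.
Proof. rewrite Hx0, Reach0. tauto. Qed.

Lemma existence : exists K, is_contour w K /\ (exists v, xi0 v /\ nearK K v) /\ (exists v, xi1 v /\ nearK K v).
Proof.
  set (Pn := fun n => exists y, xi1 y /\ Reach w x0 n y).
  assert (Ex : exists n, Pn n).
  { destruct C1 as [y0 [Wy0 Hy0]]. destruct (Reach_exists w x0 y0) as [k Hk].
    exists k, y0. split; auto. apply Hy0. apply rt_refl. }
  destruct (min_nat Pn Ex) as [n [[y [Y1 Ry]] Hmin]].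
  destruct n as [|k0].
  { exfalso. apply xi0_reach0 in Ry. pose proof (cluster_color w false xi0 y C0 Ry).
    pose proof (cluster_color w true xi1 y C1 Y1). congruence. }
  assert (NRy : ~ Reach w x0 k0 y) by (intros R; apply (Hmin k0); [lia| exists y; auto]).
  destruct (Reach_D4 w x0 k0 y Ry) as [R|[a [b [Ra [Hab Sby]]]]]; [contradiction|].
  assert (NRb : ~ Reach w x0 k0 b) by (intros R; apply NRy; eapply Reach_sc; eauto).
  assert (Dab : w a <> w b) by (intros E; apply NRb; eapply Rmono; eauto; split; auto).
  destruct (diff_present w a b Hom Hab Dab) as [e [Pe Ce]].
  set (K := fun f => present w f /\ clos_refl_trans edge (contour_step w) e f).
  assert (Kc : is_contour w K) by (exists e; split; auto; intros f; apply iff_refl).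
  assert (Ke : K e) by (split; auto; apply rt_refl).
  assert (Y1b : xi1 b).
  { apply (cluster_of_mem w true xi1 y C1 Y1). apply sc_sym; auto. }
  exists K. split; auto. split; [| exists b; split; auto; exists e; split; auto; apply (crosses_corner e a b Ce)].
  set (Q := fun k => exists a b y', Reach w x0 k a /\ ~ Reach w x0 k b /\ G_adj a b /\
                       crossK K a b /\ xi1 y' /\ crt_in (fun v => ~ Reach w x0 k v) b y').
  assert (Qk0 : Q k0).
  { exists a, b, y. repeat split; auto. exists e; auto.
    apply (crt_in_mono (same_cluster w b)).
    - intros v Sv Rv. apply NRb. eapply Reach_sc; [exact Rv| apply sc_sym; auto].
    - apply sc_path_in; auto. apply rt_refl. }
  assert (Step : forall k, (k < k0)%nat -> Q (S k) -> Q k).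
  { intros k Hk [a1 [b1 [y' [Ra1 [NRb1 [Hab1 [Kab1 [Y' Pb1]]]]]]]].
    assert (NRa1 : ~ Reach w x0 k a1) by (intros R; apply NRb1; eapply Rstep; eauto).
    destruct (Reach_D4 w x0 k a1 Ra1) as [R|[a' [b' [Ra' [Hab' Sba]]]]]; [contradiction|].
    set (C' := same_cluster w a1).
    assert (C'R : forall v, C' v -> Reach w x0 (S k) v) by (intros v Cv; eapply Reach_sc; eauto).
    assert (C'nR : forall v, C' v -> ~ Reach w x0 k v).
    { intros v Cv Rv. apply NRa1. eapply Reach_sc; [exact Rv| apply sc_sym; auto]. }
    assert (D0 : forall v, C' v -> ~ xi0 v).
    { intros v Cv Xv. apply (C'nR v Cv). apply (Reach_le w x0 0); [lia|]. apply xi0_reach0; auto. }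
    assert (D1 : forall v, C' v -> ~ xi1 v).
    { intros v Cv Xv. apply (Hmin (S k)); [lia|]. exists v; split; auto. }
    assert (Fin : finite_set C').
    { apply NNPP. intros Inf.
      destruct (w a1) eqn:Wa.
      - assert (HC : is_b_cluster w true C') by (rewrite <- Wa; apply cluster_of).
        apply (D1 a1); [apply rt_refl|]. apply (U1 C' HC Inf). apply rt_refl.
      - assert (HC : is_b_cluster w false C') by (rewrite <- Wa; apply cluster_of).
        apply (D0 a1); [apply rt_refl|]. apply (U0 C' HC Inf). apply rt_refl. }
    set (U := crt_in (fun v => ~ C' v) x0).
    assert (X0 : xi0 x0) by (apply Hx0; apply rt_refl).
    assert (nCx0 : ~ C' x0) by (intros Cx; apply (D0 x0 Cx X0)).
    assert (UnC : forall v, U v -> ~ C' v) by (intros v Uv; apply (crt_in_end _ _ _ Uv nCx0)).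
    assert (Uext : forall u v, U u -> G_adj u v -> ~ C' v -> U v).
    { intros u v Uu Huv Cv. eapply rt_trans; [exact Uu|]. apply rt_step. split; auto. }
    assert (toC : forall v, ~ U v -> crt_in (fun x => ~ U x) v a1).
    { intros v NUv.
      assert (H : exists c, C' c /\ crt_in (fun x => ~ U x) v c) by (apply toC_gen; auto).
      destruct H as [c [Cc Pc]]. eapply rt_trans; [exact Pc|].
      apply (crt_in_mono C'); [intros x Cx Ux; apply (UnC x Ux Cx)|].
      apply crt_in_sym. apply sc_path_in; auto. apply rt_refl. }
    assert (HS : forall u v, ~ U u -> ~ U v -> crt_in (fun x => ~ U x) u v).
    { intros u v Hu Hv. eapply rt_trans; [apply toC; auto| apply crt_in_sym, toC; auto]. }
    assert (HSc : forall u v, ~ ~ U u -> ~ ~ U v -> crt_in (fun x => ~ ~ U x) u v).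
    { intros u v Hu Hv. apply NNPP in Hu. apply NNPP in Hv.
      apply (crt_in_mono U); [intros x Ux NUx; auto|].
      eapply rt_trans; [apply crt_in_sym|]; apply prefix_in; auto. }
    assert (Hbd : forall u v, G_adj u v -> ~ U u -> ~ ~ U v -> w u <> w v).
    { intros u v Huv Nu NNv E. apply NNPP in NNv.
      assert (Cu : C' u).
      { apply NNPP. intros Cu. apply Nu. apply (Uext v u); auto. apply G_adj_sym; auto. }
      apply (UnC v NNv). eapply rt_trans; [exact Cu| apply rt_step; split; auto]. }
    assert (Ub1 : U b1).
    { eapply rt_trans; [apply (avoid_finite C' Fin D0 D1 x0 y'); auto|].
      apply crt_in_sym. eapply crt_in_mono; [|exact Pb1]. intros v NR Cv. apply NR. apply C'R; auto. }
    assert (Ua' : U a').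
    { eapply crt_in_mono; [|apply Reach_path; exact Ra']. intros v Rv Cv. apply (C'nR v Cv Rv). }
    assert (Cb' : C' b') by (apply sc_sym; auto).
    assert (K' : crossK K b' a').
    { apply (LK w K (fun x => ~ U x) Hom Kc HS HSc Hbd a1 b1 b' a' Hab1).
      - intros Ua1. apply (UnC a1 Ua1). apply rt_refl.
      - intros NU; apply NU; exact Ub1.
      - apply G_adj_sym; auto.
      - intros Ub'. apply (UnC b' Ub' Cb').
      - intros NU; apply NU; exact Ua'.
      - exact Kab1. }
    exists a', b', y'. split; [exact Ra'|]. split; [intros Rb'; apply (C'nR b' Cb' Rb')|].
    split; [exact Hab'|]. split; [apply crossK_sym; auto|]. split; [exact Y'|].
    apply rt_trans with a1; [|apply rt_trans with b1].
      + apply (crt_in_mono C'); [intros x Cx; apply C'nR; auto|].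
        apply crt_in_sym. apply sc_path_in; auto. apply rt_refl.
      + apply rt_step. split; auto. split; [apply NRa1|]. intros Rb. apply NRb1. apply Rlift; auto.
      + eapply crt_in_mono; [|exact Pb1]. intros v NR Rv. apply NR. apply Rlift; auto. }
  assert (Q0 : forall k, (k <= k0)%nat -> Q k -> Q 0%nat).
  { induction k as [|k IH]; intros Hk Qk; auto. apply IH; [lia|]. apply Step; auto. }
  destruct (Q0 k0 (le_n _) Qk0) as [a0 [b0 [y0 [Ra0 [_ [_ [[f [Kf Cf]] _]]]]]]].
  exists a0. split; [apply xi0_reach0; auto|]. exists f. split; auto. apply (crosses_corner f a0 b0 Cf).
Qed.

End Main.

Theorem lemma6p4 (w : config) (xi0 xi1 : vtx -> Prop) :
  in_Omega w ->
  is_b_cluster w false xi0 -> infinite_set xi0 ->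
  (forall C, is_b_cluster w false C -> infinite_set C -> same_set C xi0) ->
  is_b_cluster w true xi1 -> infinite_set xi1 ->
  (forall C, is_b_cluster w true C -> infinite_set C -> same_set C xi1) ->
  exists K, is_contour w K /\ infinite_set K /\ incident xi0 K /\ incident xi1 K /\
    forall K', is_contour w K' -> infinite_set K' -> incident xi0 K' -> incident xi1 K' ->
      same_set K' K.
Proof.
  intros Hom C0 I0 U0 C1 I1 U1.
  pose proof C0 as C0'. destruct C0' as [x0 [Wx0 Hx0]].
  destruct (existence w xi0 xi1 Hom C0 I0 U0 C1 I1 U1 x0 Hx0) as [K [Kc [[u0 [X0 N0]] [u1 [X1 N1]]]]].
  destruct (potK w K Hom Kc) as [s Hs].
  assert (Sep : s u0 <> s u1).
  { pose proof (KP_inv w K Hom Kc s Hs u0 u1 (lemmaA w K Hom Kc u0 u1 N0 N1)) as E.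
    rewrite (cluster_color w false xi0 u0 C0 X0), (cluster_color w true xi1 u1 C1 X1) in E.
    destruct (s u0), (s u1); cbn in E; congruence. }
  assert (In0 : forall v, xi0 v -> s u0 = s v).
  { intros v Xv. apply (const_on s (crossK K) xi0 u0 v Hs).
    - intros x y Hx Hy. apply (cluster_no_cross w K false xi0 Hom Kc C0 x y Hx Hy).
    - apply (cluster_conn w false); auto. }
  assert (In1 : forall v, xi1 v -> s u1 = s v).
  { intros v Xv. apply (const_on s (crossK K) xi1 u1 v Hs).
    - intros x y Hx Hy. apply (cluster_no_cross w K true xi1 Hom Kc C1 x y Hx Hy).
    - apply (cluster_conn w true); auto. }
  exists K. split; [exact Kc|]. split; [|split; [|split]].
  - intros [l Hl].
    assert (FF : finite_set (fun p : vtx => exists e, K e /\ face_of e = p)).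
    { exists (map face_of l). intros p [e [Ke <-]]. apply in_map. auto. }
    destruct (finite_bounded _ FF) as [N [HN HB]].
    assert (NoC : forall x y, Out (N+1) x -> Out (N+1) y -> ~ crossK K x y).
    { intros x y Ox _ [e [Ke Ce]]. destruct (crosses_corner e x y Ce) as [Cx _].
      destruct (HB (face_of e) (ex_intro _ e (conj Ke eq_refl))) as [B1 B2].
      unfold corner in Cx. destruct (face_of e) as [m n]. cbn [fst snd] in *.
      unfold Out in Ox.
      destruct Cx as [ -> | [ -> | [ -> | -> ]]]; cbn [fst snd] in Ox; lia. }
    destruct (infinite_out xi0 (N+1) ltac:(lia) I0) as [o0 [Y0 O0]].
    destruct (infinite_out xi1 (N+1) ltac:(lia) I1) as [o1 [Y1 O1]].
    apply Sep. rewrite (In0 o0 Y0), (In1 o1 Y1).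
    apply (const_on s (crossK K) (Out (N+1)) o0 o1 Hs NoC). apply out_connected; auto; lia.
  - apply incident_iff. eauto.
  - apply incident_iff. eauto.
  - intros K' Kc' _ Inc0 Inc1.
    apply incident_iff in Inc0, Inc1. destruct Inc0 as [v0 [Y0 M0]], Inc1 as [v1 [Y1 M1]].
    apply NNPP. intros Hne.
    assert (Hdis : forall e, K e -> K' e -> False).
    { intros e Ke Ke'. apply Hne. eapply contour_same; eauto. }
    pose proof (const_on_KP w K K' Hom Kc s Hs Hdis v0 v1 (lemmaA w K' Hom Kc' v0 v1 M0 M1)) as E.
    apply Sep. rewrite (In0 v0 Y0), (In1 v1 Y1). exact E.
Qed.
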